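(* Let $G$ be a graph not containing $K_{s,s}$. If $G$ contains a rich independent set of size $a$, then $G$ contains $H$ as an induced subgraph.
   Context: Let $H=(A,B;E)$ be a fixed bipartite graph with vertex classes $A$ and $B$ such that every vertex in $B$ has degree at most $k$ in $H$, and write $a=|A|$, $b=|B|$. Let $s$ be a positive integer. A set of vertices $S\subset V(G)$ is called rich if for every subset $T\subseteq S$ with $|T|\leq k$, there are at least $(4bs)^{b}$ vertices $v\in V(G)\setminus S$ with $N(v)\cap S=T$, i.e. which are adjacent to all vertices of $T$ and non-adjacent to all vertices of $S\setminus T$. *)

(* Defs.v *)
From mathcomp Require Import all_boot.
Set Implicit Arguments. Unset Strict Implicit. Unset Printing Implicit Defensive.

Definition simple_graph (V : finType) (e : rel V) : Prop :=
  symmetric e /\ irreflexive e.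

Definition contains_Kss (V : finType) (e : rel V) (s : nat) : Prop :=
  exists X Y : {set V}, [/\ #|X| = s, #|Y| = s, [disjoint X & Y] &
    forall x y, x \in X -> y \in Y -> e x y].

Definition independent (V : finType) (e : rel V) (S : {set V}) : Prop :=
  forall x y, x \in S -> y \in S -> ~~ e x y.

Definition rich (V : finType) (e : rel V) (k b s : nat) (S : {set V}) : Prop :=
  forall T : {set V}, T \subset S -> #|T| <= k ->
    (4 * b * s) ^ b <= #|[set v | (v \notin S) & ([set u in S | e v u] == T)]|.

(* Adjacency of the bipartite graph H = (A, B; E) on vertex set A + B. *)
Definition bip_adj (A B : finType) (E : A -> B -> bool) (u w : A + B) : bool :=
  match u, w with
  | inl x, inr y => E x y
  | inr y, inl x => E x y
  | _, _ => false
  end.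

Definition induced_bip_copy (V : finType) (e : rel V)
    (A B : finType) (E : A -> B -> bool) : Prop :=
  exists f : A + B -> V, injective f /\
    forall u w, e (f u) (f w) = bip_adj E u w.

(* Main.v *)
Require Import Defs.
From mathcomp Require Import all_boot.
From mathcomp Require Import zify.

Lemma card_bigcup_le (I T : finType) (J : {set I}) (F : I -> {set T}) :
  #|\bigcup_(i in J) F i| <= \sum_(i in J) #|F i|.
Proof.
elim/big_rec2: _ => [|i n U _ H]; first by rewrite cards0.
by have := cardsUI (F i) U; lia.
Qed.

Lemma sub_card (T : finType) (D : {set T}) n : n <= #|D| ->
  exists X : {set T}, X \subset D /\ #|X| = n.
Proof.
move/card_geqP=> [sq [uq sz sub]].
exists [set x in sq]; split.
  by apply/subsetP=> x; rewrite inE => /sub.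
by rewrite cardsE -sz; apply/card_uniqP.
Qed.

Lemma pick_transv (V B : finType) (e : rel V) (s b : nat) (d : B -> V) :
  symmetric e -> irreflexive e -> ~ contains_Kss e s -> 0 < s ->
  forall n (I : {set B}) (C : B -> {set V}), #|I| = n -> n <= b ->
  (forall y, y \in I -> (4*b*s)^n <= #|C y|) ->
  exists v : B -> V, (forall y, y \in I -> v y \in C y) /\
    (forall y z, y \in I -> z \in I -> y != z -> v y != v z /\ ~~ e (v y) (v z)).
Proof.
move=> esym eirr hK hs n; elim: n => [|n IH] I C hI hnb hC.
  exists d; move/cards0_eq: hI => ->; by split=> y; rewrite inE.
have [y0 y0I] : exists y0, y0 \in I.
  by apply/set0Pn; rewrite -card_gt0 hI.
set I' := I :\ y0.
have hI' : #|I'| = n by move: hI; rewrite (cardsD1 y0) y0I; case.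
set P := (4*b*s)^n.
have hP : 0 < P by rewrite expn_gt0 !muln_gt0 hs; apply/orP; left; lia.
set N := fun u => [set t | e u t].
set D := fun z => [set u in C y0 | #|C z :\: N u| <= P].
have hD : forall z, z \in I' -> #|D z| < s.
  move=> z zI; rewrite ltnNge; apply/negP => sD.
  have [X [XD cX]] := sub_card _ _ _ sD.
  set Y0 := C z :\: \bigcup_(x in X) (C z :\: N x).
  have cY0 : s <= #|Y0|.
    have h1 := card_bigcup_le _ _ X (fun x => C z :\: N x).
    have h2 : \sum_(x in X) #|C z :\: N x| <= \sum_(x in X) P.
      apply: leq_sum => x xX; move/subsetP: XD => /(_ x xX).
      by rewrite inE => /andP[].
    rewrite sum_nat_const cX in h2.
    have h3 := cardsD (C z) (\bigcup_(x in X) (C z :\: N x)).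
    have h4 : #|C z :&: \bigcup_(x in X) (C z :\: N x)| <=
              #|\bigcup_(x in X) (C z :\: N x)| by apply/subset_leq_card/subsetIr.
    have h5 := hC z (subsetP (subD1set I y0) z zI).
    rewrite expnS -/P in h5.
    rewrite /Y0 h3.
    have h6 : s * 1 <= s * ((4 * b - 1) * P) by rewrite leq_mul2l; apply/orP; right; nia.
    nia.
  have [Y [YY0 cY]] := sub_card _ _ _ cY0.
  apply: hK; exists X, Y; split => //.
    apply/pred0P => u /=; apply/negbTE/negP => /andP[uX uY].
    move/subsetP: YY0 => /(_ u uY); rewrite !inE => /andP[nU uC].
    apply: (negP nU); apply/bigcupP; exists u => //; rewrite !inE uC andbT eirr //.
  move=> x y xX yY.
  move/subsetP: YY0 => /(_ y yY); rewrite !inE => /andP[nU yC].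
  apply/negPn/negP => nxy.
  apply: (negP nU); apply/bigcupP; exists x => //; rewrite !inE yC andbT nxy //.
set U := \bigcup_(z in I') D z.
have [w wC wU] : exists2 w, w \in C y0 & w \notin U.
  have h1 := card_bigcup_le _ _ I' D.
  have h2 : \sum_(z in I') #|D z| <= \sum_(z in I') s.
    by apply: leq_sum => z zI; apply: ltnW; apply: hD.
  rewrite sum_nat_const hI' in h2.
  have h5 := hC y0 y0I; rewrite expnS -/P in h5.
  have : 0 < #|C y0 :\: U|.
    rewrite cardsD.
    have : #|C y0 :&: U| <= #|U| by apply/subset_leq_card/subsetIr.
    have : n * s < b * s by rewrite ltn_pmul2r.
    have : b * s <= 4 * b * s * P.
      have : b * s * 1 <= b * s * (4 * P) by rewrite leq_mul2l; apply/orP; right; lia.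
      by rewrite muln1 !mulnA [4 * b]mulnC -!mulnA [s * (4 * P)]mulnA [s * 4]mulnC -!mulnA.
    rewrite -/U in h1.
    lia.
  rewrite card_gt0 => /set0Pn [w]; rewrite inE => /andP[wU wC].
  by exists w.
set C' := fun z => C z :\: N w :\ w.
have [v' [hv1 hv2]] : exists v' : B -> V, (forall y, y \in I' -> v' y \in C' y) /\
    (forall y z, y \in I' -> z \in I' -> y != z -> v' y != v' z /\ ~~ e (v' y) (v' z)).
  apply: IH => //; first by lia.
  move=> z zI.
  have : #|C z :\: N w| > P.
    rewrite ltnNge; apply/negP => hle; apply: (negP wU); apply/bigcupP.
    by exists z => //; rewrite inE wC hle.
  rewrite (cardsD1 w (C z :\: N w)) /C'.
  case: (w \in C z :\: N w) => /=; lia.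
have hI'E : forall z, z \in I -> z != y0 -> z \in I' by move=> z zI nz; rewrite !inE nz.
have hC'1 : forall z, z \in I' -> [/\ v' z \in C z, v' z != w & ~~ e w (v' z)].
  move=> z zI; have := hv1 z zI; rewrite !inE => /and3P[-> -> ->]; split => //.
exists (fun z => if z == y0 then w else v' z); split.
  move=> y yI; case: eqP => [->|/eqP ny] //.
  by have [] := hC'1 y (hI'E y yI ny).
move=> y z yI zI nyz.
case: (eqVneq y y0) => [ey|ny]; case: (eqVneq z y0) => [ez|nz].
- by move: nyz; rewrite ey ez eqxx.
- have [_ h1 h2] := hC'1 z (hI'E z zI nz).
  by rewrite eq_sym h1 h2.
- have [_ h1 h2] := hC'1 y (hI'E y yI ny).
  by rewrite h1 esym h2.
- by apply: hv2 => //; apply: hI'E.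
Qed.

Theorem lemma2p3 (A B : finType) (E : A -> B -> bool) (k s : nat)
    (hdeg : forall y : B, #|[set x : A | E x y]| <= k)
    (hs : 0 < s)
    (V : finType) (e : rel V) (hG : simple_graph e)
    (hK : ~ contains_Kss e s)
    (S : {set V}) (hSind : independent e S) (hSsize : #|S| = #|A|)
    (hSrich : rich e k #|B| s S) :
  induced_bip_copy e E.
Proof.
case: hG => esy eirr.
pose g (x : A) : V := @enum_val V (mem S) (cast_ord (esym hSsize) (enum_rank x)).
have ginj : injective g.
  by move=> x1 x2 /enum_val_inj/cast_ord_inj/enum_rank_inj.
have gS : forall x, g x \in S by move=> x; apply: enum_valP.
pose C (y : B) := [set v | (v \notin S) & ([set u in S | e v u] == g @: [set x | E x y])].
have hC : forall y, (4 * #|B| * s) ^ #|B| <= #|C y|.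
  move=> y; apply: hSrich.
    by apply/subsetP => u /imsetP [x _ ->].
  exact: leq_trans (leq_imset_card _ _) (hdeg y).
have d : B -> V.
  move=> y; have := hC y; case: (pickP (mem (C y))) => [v _ _| h0]; first exact: v.
  move=> hh; exfalso; move: hh; rewrite (eq_card0 h0) leqn0 expn_eq0 !muln_eq0.
  have : 0 < #|B| by apply/card_gt0P; exists y.
  case: (#|B|) => //= n _; rewrite andbT; apply/negP; lia.
have [v [hv1 hv2]] := @pick_transv V B e s #|B| d esy eirr hK hs #|B| [set: B] C
  (cardsT _) (leqnn _) (fun y _ => hC y).
have vC : forall y, v y \in C y by move=> y; apply: hv1; rewrite inE.
have vS : forall y, v y \notin S by move=> y; have := vC y; rewrite inE => /andP[].
have vN : forall x y, e (v y) (g x) = E x y.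
  move=> x y; have := vC y; rewrite inE => /andP[_ /eqP h].
  have : (g x \in [set u in S | e (v y) u]) = (g x \in g @: [set x | E x y]) by rewrite h.
  rewrite inE gS /= => ->.
  by rewrite mem_imset // inE.
exists (fun u => match u with inl x => g x | inr y => v y end); split.
  case=> [x1|y1] [x2|y2] /= h.
  - by rewrite (ginj _ _ h).
  - by have := vS y2; rewrite -h gS.
  - by have := vS y1; rewrite h gS.
  - case: (eqVneq y1 y2) => [-> //|ny].
    by have [/eqP] := hv2 y1 y2 (in_setT _) (in_setT _) ny.
case=> [x1|y1] [x2|y2] /=.
- exact/negbTE/hSind.
- by rewrite esy vN.
- by rewrite vN.
- case: (eqVneq y1 y2) => [->|ny]; first by rewrite eirr.
  by have [_ /negbTE] := hv2 y1 y2 (in_setT _) (in_setT _) ny.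
Qed.
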